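(* Let $\mathcal{H}_{A_1},\mathcal{H}_{A_2},\mathcal{H}_{B_1},\mathcal{H}_{B_2}$ be finite-dimensional Hilbert spaces with fixed reference bases of $\mathcal{H}_{A_1}$ and $\mathcal{H}_{A_2}$ (and the product basis on $\mathcal{H}_{A_1}\otimes\mathcal{H}_{A_2}$). For all states $\rho_{A_1B_1}$ on $\mathcal{H}_{A_1}\otimes\mathcal{H}_{B_1}$ and $\rho_{A_2B_2}$ on $\mathcal{H}_{A_2}\otimes\mathcal{H}_{B_2}$, $$C^{A_1A_2|B_1B_2}_{\max}(\rho_{A_1B_1}\otimes\rho_{A_2B_2})=C^{A_1|B_1}_{\max}(\rho_{A_1B_1})+C^{A_2|B_2}_{\max}(\rho_{A_2B_2}).$$
   Context: $D_{\max}(\rho\|\sigma)=\min\{\lambda\ge0:\rho\leq2^\lambda\sigma\}$. For a split $X|Y$ where $X$ has a reference basis, the set $\mathcal{IQ}$ of incoherent-quantum states consists of states $\sum_kp_k\sigma^X_k\otimes\tau^Y_k$ with $\sigma^X_k$ diagonal in the basis of $X$ and $\tau^Y_k$ arbitrary states; $C^{X|Y}_{\max}(\rho_{XY})=\min_{\sigma\in\mathcal{IQ}}D_{\max}(\rho_{XY}\|\sigma)$. *)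

(* Defs.v *)
From HB Require Import structures.
From mathcomp Require Import all_boot all_order all_algebra.
From mathcomp Require Import complex mxtens.
From mathcomp Require Import all_classical all_reals ereal exp.
Set Implicit Arguments. Unset Strict Implicit. Unset Printing Implicit Defensive.
Import Order.TTheory GRing.Theory Num.Theory.
Local Open Scope ring_scope.
Local Open Scope classical_set_scope.
Local Open Scope complex_scope.

Section QDefs.
Variable R : realType.
Local Notation C := (R[i]).

Definition adjmx {m n} (A : 'M[C]_(m, n)) : 'M[C]_(n, m) :=
  (map_mx Num.conj A)^T.

Definition psd {n} (A : 'M[C]_n) : Prop :=
  adjmx A = A /\ forall v : 'rV[C]_n, 0 <= (v *m A *m adjmx v) 0 0.

Definition loewner_le {n} (A B : 'M[C]_n) : Prop := psd (B - A).

Definition is_state {n} (A : 'M[C]_n) : Prop := psd A /\ \tr A = 1.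

(* D_max(rho || sigma) = min { lambda >= 0 : rho <= 2^lambda sigma }
   (rendered as an infimum in the extended reals; +oo if the set is empty) *)
Definition Dmax {n} (rho sigma : 'M[C]_n) : \bar R :=
  ereal_inf [set (l%:E)%E | l in
     [set l : R | 0 <= l /\ loewner_le rho ((powR 2 l)%:C *: sigma)]].

(* incoherent-quantum states on X (dim dX, reference basis = standard basis)
   tensor Y (dim dY): finite convex combinations of sigma_k (x) tau_k with
   sigma_k diagonal states on X and tau_k arbitrary states on Y *)
Definition IQ {dX dY} (s : 'M[C]_(dX * dY)) : Prop :=
  exists (K : nat) (p : 'I_K -> R) (sig : 'I_K -> 'M[C]_dX)
         (tau : 'I_K -> 'M[C]_dY),
    (forall k, 0 <= p k) /\ \sum_(k < K) p k = 1 /\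
    (forall k, is_state (sig k) /\ is_diag_mx (sig k)) /\
    (forall k, is_state (tau k)) /\
    s = \sum_(k < K) (p k)%:C *: (sig k *t tau k).

Definition Cmax {dX dY} (rho : 'M[C]_(dX * dY)) : \bar R :=
  ereal_inf [set Dmax rho s | s in [set s | @IQ dX dY s]].

(* reorder the factors of H_(A1 B1) (x) H_(A2 B2) into H_(A1 A2) (x) H_(B1 B2) *)
Definition reorder_index {a1 b1 a2 b2 : nat}
  (i : 'I_((a1 * a2) * (b1 * b2))) : 'I_((a1 * b1) * (a2 * b2)) :=
  let a := (mxtens_unindex i).1 in
  let b := (mxtens_unindex i).2 in
  mxtens_index (mxtens_index ((mxtens_unindex a).1, (mxtens_unindex b).1),
                mxtens_index ((mxtens_unindex a).2, (mxtens_unindex b).2)).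

Definition reorder {a1 b1 a2 b2 : nat} (M : 'M[C]_((a1 * b1) * (a2 * b2)))
  : 'M[C]_((a1 * a2) * (b1 * b2)) :=
  \matrix_(i, j) M (@reorder_index a1 b1 a2 b2 i) (@reorder_index a1 b1 a2 b2 j).

End QDefs.

(* Main.v *)
Require Import Defs.
From HB Require Import structures.
From mathcomp Require Import all_boot all_order all_algebra.
From mathcomp Require Import complex mxtens.
From mathcomp Require Import all_classical all_reals ereal exp.
From mathcomp Require Import sequences.
From mathcomp Require Import ring lra.
Import Order.TTheory GRing.Theory Num.Theory.
Local Open Scope ring_scope.

Set Implicit Arguments. Unset Strict Implicit. Unset Printing Implicit Defensive.

Section PartA.
Variable R : realType.
Local Notation C := (R[i]).

Lemma adjmxE m n (A : 'M[C]_(m,n)) i j : adjmx A i j = Num.conj (A j i).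
Proof. by rewrite !mxE. Qed.

Lemma adjmxK m n (A : 'M[C]_(m,n)) : adjmx (adjmx A) = A.
Proof. by apply/matrixP=> i j; rewrite !mxE conjCK. Qed.

Lemma adjmx_mul m n p (A : 'M[C]_(m,n)) (B : 'M[C]_(n,p)) :
  adjmx (A *m B) = adjmx B *m adjmx A.
Proof.
apply/matrixP=> i j; rewrite !mxE rmorph_sum; apply: eq_bigr => k _.
by rewrite !mxE rmorphM mulrC.
Qed.

Lemma adjmxD m n (A B : 'M[C]_(m,n)) : adjmx (A + B) = adjmx A + adjmx B.
Proof. by apply/matrixP=> i j; rewrite !mxE rmorphD. Qed.

Lemma adjmxN m n (A : 'M[C]_(m,n)) : adjmx (- A) = - adjmx A.
Proof. by apply/matrixP=> i j; rewrite !mxE rmorphN. Qed.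

Lemma adjmxB m n (A B : 'M[C]_(m,n)) : adjmx (A - B) = adjmx A - adjmx B.
Proof. by rewrite adjmxD adjmxN. Qed.

Lemma adjmxZ m n (c : C) (A : 'M[C]_(m,n)) : adjmx (c *: A) = Num.conj c *: adjmx A.
Proof. by apply/matrixP=> i j; rewrite !mxE rmorphM. Qed.

Lemma adjmx0 m n : adjmx (0 : 'M[C]_(m,n)) = 0.
Proof. by apply/matrixP=> i j; rewrite !mxE rmorph0. Qed.

Lemma adjmx1 n : adjmx (1%:M : 'M[C]_n) = 1%:M.
Proof. by apply/matrixP=> i j; rewrite !mxE eq_sym; case: eqP; rewrite /= ?rmorph1 ?rmorph0. Qed.

Lemma adjmx_sum m n (I : finType) (F : I -> 'M[C]_(m,n)) :
  adjmx (\sum_i F i) = \sum_i adjmx (F i).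
Proof.
apply/matrixP=> i j; rewrite !mxE summxE rmorph_sum summxE.
by apply: eq_bigr => k _; rewrite !mxE.
Qed.

Lemma adjmx_tens m n p q (A : 'M[C]_(m,n)) (B : 'M[C]_(p,q)) :
  adjmx (A *t B) = adjmx A *t adjmx B.
Proof. by apply/matrixP=> i j; rewrite !mxE rmorphM. Qed.

Definition qf n (v : 'rV[C]_n) (A : 'M[C]_n) : C := (v *m A *m adjmx v) 0 0.

Lemma qfE n (v : 'rV[C]_n) (A : 'M[C]_n) :
  qf v A = \sum_i \sum_j v 0 i * A i j * Num.conj (v 0 j).
Proof.
rewrite /qf mxE exchange_big /=; apply: eq_bigr => j _.
by rewrite !mxE big_distrl.
Qed.

Lemma rv_norm_ge0 n (w : 'rV[C]_n) : 0 <= (w *m adjmx w) 0 0.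
Proof.
rewrite mxE; apply: sumr_ge0 => k _; rewrite !mxE; exact: mul_conjC_ge0.
Qed.

Lemma psd_XX m n (X : 'M[C]_(m,n)) : psd (adjmx X *m X).
Proof.
split; first by rewrite adjmx_mul adjmxK.
move=> v; set w := v *m adjmx X.
have -> : v *m (adjmx X *m X) *m adjmx v = w *m adjmx w.
  by rewrite /w adjmx_mul adjmxK !mulmxA.
exact: rv_norm_ge0.
Qed.

Lemma psdD n (A B : 'M[C]_n) : psd A -> psd B -> psd (A + B).
Proof.
move=> [hA pA] [hB pB]; split; first by rewrite adjmxD hA hB.
move=> v; rewrite mulmxDr mulmxDl mxE; exact: addr_ge0.
Qed.

Lemma psdZ n (c : C) (A : 'M[C]_n) : 0 <= c -> psd A -> psd (c *: A).
Proof.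
move=> c0 [hA pA]; split; first by rewrite adjmxZ hA geC0_conj.
move=> v; rewrite -scalemxAr -scalemxAl mxE; exact: mulr_ge0.
Qed.

Lemma psd0 n : psd (0 : 'M[C]_n).
Proof. by split; [rewrite adjmx0 | move=> v; rewrite mulmx0 mul0mx mxE]. Qed.

Lemma psd1 n : psd (1%:M : 'M[C]_n).
Proof. by split; [rewrite adjmx1 | move=> v; rewrite mulmx1; apply: rv_norm_ge0]. Qed.

Lemma psd_sum n (I : finType) (F : I -> 'M[C]_n) :
  (forall i, psd (F i)) -> psd (\sum_i F i).
Proof.
move=> H; elim/big_rec: _ => [|i x _ Hx]; first exact: psd0.
exact: psdD.
Qed.

Lemma psd_decomp n (A : 'M[C]_n) : psd A -> exists X : 'M[C]_n, A = adjmx X *m X.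
Proof.
move=> [hA pA].
have hermA : A \is hermsymmx.
  apply/eqP; rewrite expr0 scale1r.
  by rewrite -{1}hA /adjmx map_trmx.
have /orthomx_spectralP Aeq := hermitian_normalmx hermA.
set P := spectralmx A in Aeq; set d := spectral_diag A in Aeq.
have Pu : P \is unitarymx by exact: spectral_unitarymx.
have PP : P *m adjmx P = 1%:M.
  by move/unitarymxP: Pu; rewrite /adjmx map_trmx.
have iP : invmx P = adjmx P by rewrite invmx_unitary // /adjmx map_trmx.
rewrite iP in Aeq.
have d_ge0 : forall k, 0 <= d 0 k.
  move=> k; have := pA (row k P).
  have -> : (row k P *m A *m adjmx (row k P)) 0 0 = (P *m A *m adjmx P) k k.
    rewrite !mxE; apply: eq_bigr => l _; rewrite !mxE; congr (_ * _).
    by apply: eq_bigr => l' _; rewrite !mxE.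
  rewrite Aeq !mulmxA PP mul1mx -mulmxA PP mulmx1 !mxE eqxx mulr1n.
  by [].
pose s := \row_k sqrtC (d 0 k).
exists (diag_mx s *m P).
rewrite adjmx_mul !mulmxA Aeq; congr (_ *m _).
rewrite -mulmxA; congr (_ *m _).
apply/matrixP=> i j; rewrite mul_mx_diag !mxE.
case: (eqVneq i j) => [->|ij]; last by rewrite !mulr0n rmorph0 mul0r.
rewrite ?eqxx !mulr1n geC0_conj ?sqrtC_ge0 // -expr2 sqrtCK //.
Qed.

Lemma psd_herm n (A : 'M[C]_n) : psd A -> adjmx A = A.
Proof. by case. Qed.

Lemma psd_tens m n (A : 'M[C]_m) (B : 'M[C]_n) : psd A -> psd B -> psd (A *t B).
Proof.
move=> /psd_decomp [X ->] /psd_decomp [Y ->].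
by rewrite -tensmx_mul -adjmx_tens; apply: psd_XX.
Qed.

Lemma tr_psd_mul n (A B : 'M[C]_n) : psd A -> psd B -> 0 <= \tr (A *m B).
Proof.
move=> /psd_decomp [X ->] [hB pB].
rewrite -mulmxA mxtrace_mulC /mxtrace; apply: sumr_ge0 => k _.
have := pB (row k X).
suff -> : (X *m B *m adjmx X) k k = (row k X *m B *m adjmx (row k X)) 0 0 by [].
by rewrite -!row_mul !mxE; apply: eq_bigr => l _; rewrite !mxE.
Qed.

Lemma psd_tr_ge0 n (A : 'M[C]_n) : psd A -> 0 <= \tr A.
Proof. by move=> pA; rewrite -[A]mulmx1; apply: tr_psd_mul => //; apply: psd1. Qed.

Lemma qf_herm_real n (v : 'rV[C]_n) (A : 'M[C]_n) : adjmx A = A ->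
  Num.conj (qf v A) = qf v A.
Proof.
move=> hA; rewrite /qf.
have -> : Num.conj ((v *m A *m adjmx v) 0 0) = adjmx (v *m A *m adjmx v) 0 0.
  by rewrite !mxE.
by rewrite !adjmx_mul adjmxK hA mulmxA.
Qed.

Lemma qf_delta n (A : 'M[C]_n) i : qf (delta_mx 0 i) A = A i i.
Proof.
rewrite qfE (bigD1 i) //= [X in _ + X]big1 ?addr0.
  rewrite (bigD1 i) //= [X in _ + X]big1 ?addr0.
    by rewrite !mxE !eqxx /= conjC1 mulr1 mul1r.
  by move=> j /negPf ji; rewrite !mxE ji /= conjC0 mulr0.
move=> j /negPf ji; rewrite big1 // => k _.
by rewrite !mxE ji /= !mul0r.
Qed.

Lemma psd_diag_ge0 n (A : 'M[C]_n) i : psd A -> 0 <= A i i.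
Proof.
move=> [_ pA]; have := pA (delta_mx 0 i : 'rV[C]_n).
by rewrite -[(_ *m _ *m _) 0 0]/(qf _ _) qf_delta.
Qed.

End PartA.

Section PartB.
Variable R : realType.
Local Notation C := (R[i]).

Lemma sum_tens_index (V : nmodType) m n (F : 'I_(m * n) -> V) :
  \sum_(x < m * n) F x = \sum_(i < m) \sum_(j < n) F (mxtens_index (i, j)).
Proof.
rewrite pair_big /= (reindex (fun p : 'I_m * 'I_n => mxtens_index p)) //=.
  by apply: eq_bigr => -[i j] _.
by exists (@mxtens_unindex m n) => x _; rewrite (mxtens_indexK, mxtens_unindexK).
Qed.

Lemma tensmx_suml m n p q (I : finType) (F : I -> 'M[C]_(m,n)) (B : 'M[C]_(p,q)) :
  (\sum_k F k) *t B = \sum_k (F k *t B).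
Proof.
apply/matrixP=> i j; rewrite !mxE !summxE big_distrl /=.
by apply: eq_bigr => k _; rewrite !mxE.
Qed.

Lemma tensmx_sumr m n p q (I : finType) (A : 'M[C]_(m,n)) (F : I -> 'M[C]_(p,q)) :
  A *t (\sum_k F k) = \sum_k (A *t F k).
Proof.
apply/matrixP=> i j; rewrite !mxE !summxE big_distrr /=.
by apply: eq_bigr => k _; rewrite !mxE.
Qed.

Lemma tensmxZl m n p q (c : C) (A : 'M[C]_(m,n)) (B : 'M[C]_(p,q)) :
  (c *: A) *t B = c *: (A *t B).
Proof. by apply/matrixP=> i j; rewrite !mxE mulrA. Qed.

Lemma tensmxZr m n p q (c : C) (A : 'M[C]_(m,n)) (B : 'M[C]_(p,q)) :
  A *t (c *: B) = c *: (A *t B).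
Proof. by apply/matrixP=> i j; rewrite !mxE mulrCA. Qed.

Lemma tensmxDl m n p q (A1 A2 : 'M[C]_(m,n)) (B : 'M[C]_(p,q)) :
  (A1 + A2) *t B = A1 *t B + A2 *t B.
Proof. by apply/matrixP=> i j; rewrite !mxE mulrDl. Qed.

Lemma tensmxDr m n p q (A : 'M[C]_(m,n)) (B1 B2 : 'M[C]_(p,q)) :
  A *t (B1 + B2) = A *t B1 + A *t B2.
Proof. by apply/matrixP=> i j; rewrite !mxE mulrDr. Qed.

Lemma tensmxNl m n p q (A : 'M[C]_(m,n)) (B : 'M[C]_(p,q)) :
  (- A) *t B = - (A *t B).
Proof. by apply/matrixP=> i j; rewrite !mxE mulNr. Qed.

Lemma tensmxBl m n p q (A1 A2 : 'M[C]_(m,n)) (B : 'M[C]_(p,q)) :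
  (A1 - A2) *t B = A1 *t B - A2 *t B.
Proof. by rewrite tensmxDl tensmxNl. Qed.

Lemma tensmxBr m n p q (A : 'M[C]_(m,n)) (B1 B2 : 'M[C]_(p,q)) :
  A *t (B1 - B2) = A *t B1 - A *t B2.
Proof. by apply/matrixP=> i j; rewrite !mxE mulrBr. Qed.

Lemma index_eq m n (i i' : 'I_m) (j j' : 'I_n) :
  (mxtens_index (i, j) == mxtens_index (i', j')) = (i == i') && (j == j').
Proof.
apply/eqP/andP => [/(congr1 (@mxtens_unindex m n))|[/eqP-> /eqP->] //].
by rewrite !mxtens_indexK => -[-> ->].
Qed.

Lemma tens11 m n : (1%:M : 'M[C]_m) *t (1%:M : 'M[C]_n) = 1%:M.
Proof.
apply/matrixP=> i j; case: (mxtens_indexP i) => i1 i2; case: (mxtens_indexP j) => j1 j2.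
by rewrite tensmxE !mxE index_eq; case: (i1 == j1); case: (i2 == j2); rewrite ?mulr1n ?mulr0n ?mulr0 ?mul0r ?mulr1.
Qed.

Lemma tr_tens m n (A : 'M[C]_m) (B : 'M[C]_n) : \tr (A *t B) = \tr A * \tr B.
Proof. by rewrite /mxtrace mulr_sum; apply: eq_bigr => k _; rewrite !mxE. Qed.

Lemma diag_tens m n (A : 'M[C]_m) (B : 'M[C]_n) :
  is_diag_mx A -> is_diag_mx B -> is_diag_mx (A *t B).
Proof.
move=> /is_diag_mxP dA /is_diag_mxP dB; apply/is_diag_mxP => i j.
case: (mxtens_indexP i) => i1 i2; case: (mxtens_indexP j) => j1 j2.
rewrite tensmxE val_eqE index_eq negb_and => /orP[/dA -> | /dB ->]; by rewrite ?mul0r ?mulr0.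
Qed.

Section Reorder.
Variables a1 b1 a2 b2 : nat.

Definition rinv (k : 'I_((a1 * b1) * (a2 * b2))) : 'I_((a1 * a2) * (b1 * b2)) :=
  let x := mxtens_unindex (mxtens_unindex k).1 in
  let y := mxtens_unindex (mxtens_unindex k).2 in
  mxtens_index (mxtens_index (x.1, y.1), mxtens_index (x.2, y.2)).

Local Notation rr := (@reorder_index a1 b1 a2 b2).

Lemma rrE (i1 : 'I_a1) (i2 : 'I_a2) (j1 : 'I_b1) (j2 : 'I_b2) :
  rr (mxtens_index (mxtens_index (i1, i2), mxtens_index (j1, j2))) =
  mxtens_index (mxtens_index (i1, j1), mxtens_index (i2, j2)).
Proof. by rewrite /reorder_index !mxtens_indexK. Qed.

Lemma rinvE (i1 : 'I_a1) (i2 : 'I_a2) (j1 : 'I_b1) (j2 : 'I_b2) :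
  rinv (mxtens_index (mxtens_index (i1, j1), mxtens_index (i2, j2))) =
  mxtens_index (mxtens_index (i1, i2), mxtens_index (j1, j2)).
Proof. by rewrite /rinv !mxtens_indexK. Qed.

Lemma rrK : cancel rr rinv.
Proof.
move=> k; case: (mxtens_indexP k) => x y.
case: (mxtens_indexP x) => i1 i2; case: (mxtens_indexP y) => j1 j2.
by rewrite rrE rinvE.
Qed.

Lemma rinvK : cancel rinv rr.
Proof.
move=> k; case: (mxtens_indexP k) => x y.
case: (mxtens_indexP x) => i1 i2; case: (mxtens_indexP y) => j1 j2.
by rewrite rinvE rrE.
Qed.

Lemma rr_bij : bijective rr.
Proof. by exists rinv; [exact: rrK | exact: rinvK]. Qed.

Lemma rr_inj : injective rr.
Proof. exact: can_inj rrK. Qed.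

Lemma sum_rr (V : nmodType) (F : 'I_((a1 * b1) * (a2 * b2)) -> V) :
  \sum_k F k = \sum_k F (rr k).
Proof. by rewrite (reindex rr) //; exists rinv => k _; [exact: rrK | exact: rinvK]. Qed.

Local Notation ro := (@reorder R a1 b1 a2 b2).

Lemma roE M i j : ro M i j = M (rr i) (rr j).
Proof. by rewrite mxE. Qed.

Lemma ro_mul (A B : 'M[C]_((a1 * b1) * (a2 * b2))) : ro A *m ro B = ro (A *m B).
Proof.
apply/matrixP=> i j; rewrite !mxE (sum_rr (fun k => A (rr i) k * B k (rr j))).
by apply: eq_bigr => k _; rewrite !mxE.
Qed.

Lemma ro_adj (A : 'M[C]_((a1 * b1) * (a2 * b2))) : adjmx (ro A) = ro (adjmx A).
Proof. by apply/matrixP=> i j; rewrite !mxE. Qed.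

Lemma ro_tr (A : 'M[C]_((a1 * b1) * (a2 * b2))) : \tr (ro A) = \tr A.
Proof. by rewrite /mxtrace (sum_rr (fun k => A k k)); apply: eq_bigr => k _; rewrite !mxE. Qed.

Lemma roD (A B : 'M[C]_((a1 * b1) * (a2 * b2))) : ro (A + B) = ro A + ro B.
Proof. by apply/matrixP=> i j; rewrite !mxE. Qed.

Lemma roN (A : 'M[C]_((a1 * b1) * (a2 * b2))) : ro (- A) = - ro A.
Proof. by apply/matrixP=> i j; rewrite !mxE. Qed.

Lemma roB (A B : 'M[C]_((a1 * b1) * (a2 * b2))) : ro (A - B) = ro A - ro B.
Proof. by rewrite roD roN. Qed.

Lemma roZ (c : C) (A : 'M[C]_((a1 * b1) * (a2 * b2))) : ro (c *: A) = c *: ro A.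
Proof. by apply/matrixP=> i j; rewrite !mxE. Qed.

Lemma ro_sum (I : finType) (F : I -> 'M[C]_((a1 * b1) * (a2 * b2))) :
  ro (\sum_k F k) = \sum_k ro (F k).
Proof. by apply/matrixP=> i j; rewrite !mxE !summxE; apply: eq_bigr => k _; rewrite !mxE. Qed.

Lemma ro1 : ro 1%:M = 1%:M.
Proof. by apply/matrixP=> i j; rewrite !mxE (inj_eq rr_inj). Qed.

Lemma psd_ro (A : 'M[C]_((a1 * b1) * (a2 * b2))) : psd A -> psd (ro A).
Proof.
move=> /psd_decomp [X ->]; rewrite -ro_mul -ro_adj; exact: psd_XX.
Qed.

Lemma ro_tens4 (A : 'M[C]_a1) (B : 'M[C]_b1) (D : 'M[C]_a2) (E : 'M[C]_b2) :
  ro ((A *t B) *t (D *t E)) = (A *t D) *t (B *t E).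
Proof.
apply/matrixP=> i j; case: (mxtens_indexP i) => x y; case: (mxtens_indexP j) => x' y'.
case: (mxtens_indexP x) => i1 i2; case: (mxtens_indexP y) => j1 j2.
case: (mxtens_indexP x') => k1 k2; case: (mxtens_indexP y') => l1 l2.
rewrite roE !rrE !tensmxE.
by rewrite mulrA mulrA; congr (_ * _); rewrite -!mulrA; congr (_ * _); rewrite mulrC.
Qed.

End Reorder.
End PartB.

Section PartC.
Variable R : realType.
Local Notation C := (R[i]).
Local Notation "x %:C" := (real_complex R x) (format "x %:C").

Lemma rc_ge0 (x : R) : (0 <= x%:C) = (0 <= x).
Proof. by rewrite lecR. Qed.

Lemma rc_sum (I : finType) (F : I -> R) : (\sum_i F i)%:C = \sum_i (F i)%:C.
Proof. by rewrite raddf_sum. Qed.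

Lemma rcM (x y : R) : (x * y)%:C = x%:C * y%:C.
Proof. by rewrite rmorphM. Qed.

Lemma rc1 : (1 : R)%:C = 1. Proof. by []. Qed.

Lemma state_tens m n (A : 'M[C]_m) (B : 'M[C]_n) :
  is_state A -> is_state B -> is_state (A *t B).
Proof.
move=> [pA tA] [pB tB]; split; first exact: psd_tens.
by rewrite tr_tens tA tB mulr1.
Qed.

Lemma IQ_state dX dY (s : 'M[C]_(dX * dY)) : IQ s -> is_state s.
Proof.
move=> [K [p [sig [tau [p0 [p1 [hs [ht ->]]]]]]]]; split.
  apply: psd_sum => k; apply: psdZ; first by rewrite rc_ge0.
  by apply: psd_tens; [case: (hs k) => -[] | case: (ht k)].
rewrite raddf_sum /= -rc1 -p1 rc_sum; apply: eq_bigr => k _.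
rewrite mxtraceZ tr_tens; case: (hs k) => -[_ ->] _; case: (ht k) => _ ->.
by rewrite !mulr1.
Qed.

Lemma IQ_tens a1 b1 a2 b2 (s1 : 'M[C]_(a1 * b1)) (s2 : 'M[C]_(a2 * b2)) :
  IQ s1 -> IQ s2 -> IQ (reorder (s1 *t s2)).
Proof.
move=> [K [p [sig [tau [p0 [p1 [hs [ht ->]]]]]]]].
move=> [L [q [sig' [tau' [q0 [q1 [hs' [ht' ->]]]]]]]].
pose u (x : 'I_(K * L)) := mxtens_unindex x.
exists (K * L)%N, (fun x => p (u x).1 * q (u x).2),
  (fun x => sig (u x).1 *t sig' (u x).2), (fun x => tau (u x).1 *t tau' (u x).2).
split; first by move=> x; apply: mulr_ge0.
split; first by rewrite -mulr_sum p1 q1 mulr1.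
split.
  move=> x; case: (hs (u x).1) => e1 d1; case: (hs' (u x).2) => e2 d2.
  by split; [apply: state_tens | apply: diag_tens].
split; first by move=> x; apply: state_tens.
rewrite tensmx_suml ro_sum sum_tens_index; apply: eq_bigr => k _.
rewrite tensmx_sumr ro_sum; apply: eq_bigr => l _.
by rewrite /u mxtens_indexK /= tensmxZl tensmxZr roZ roZ scalerA ro_tens4 rcM mulrC.
Qed.

Lemma IQ_conv dX dY (s1 s2 : 'M[C]_(dX * dY)) (a : R) :
  0 <= a <= 1 -> IQ s1 -> IQ s2 -> IQ (a%:C *: s1 + (1 - a)%:C *: s2).
Proof.
move=> /andP[a0 a1].
move=> [K [p [sig [tau [p0 [p1 [hs [ht ->]]]]]]]].
move=> [L [q [sig' [tau' [q0 [q1 [hs' [ht' ->]]]]]]]].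
have sl : forall x : 'I_K, fintype.split (lshift L x) = inl x := fun x => unsplitK (inl x).
have sr : forall x : 'I_L, fintype.split (rshift K x) = inr x := fun x => unsplitK (inr x).
exists (K + L)%N,
  (fun x => match fintype.split x with inl k => a * p k | inr l => (1 - a) * q l end),
  (fun x => match fintype.split x with inl k => sig k | inr l => sig' l end),
  (fun x => match fintype.split x with inl k => tau k | inr l => tau' l end).
split.
  move=> x; case: (fintype.split x) => k; apply: mulr_ge0 => //; by rewrite subr_ge0.
split.
  rewrite big_split_ord /=.
  under eq_bigr do rewrite sl. under [X in _ + X]eq_bigr do rewrite sr.
  by rewrite -!mulr_sumr p1 q1 !mulr1 addrC subrK.
split; first by move=> x; case: (fintype.split x).
split; first by move=> x; case: (fintype.split x).
rewrite big_split_ord /=; congr (_ + _).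
  rewrite scaler_sumr; apply: eq_bigr => k _; by rewrite sl rcM scalerA.
rewrite scaler_sumr; apply: eq_bigr => k _; by rewrite sr rcM scalerA.
Qed.

Lemma delta_psd n (i : 'I_n) : psd (delta_mx i i : 'M[C]_n).
Proof.
have -> : (delta_mx i i : 'M[C]_n) = adjmx (delta_mx 0 i : 'rV[C]_n) *m delta_mx 0 i.
  have -> : adjmx (delta_mx 0 i : 'rV[C]_n) = delta_mx i 0.
    apply/matrixP=> x y; rewrite !mxE; case: (x == i); case: (y == 0);
    by rewrite /= ?conjC1 ?conjC0.
  by rewrite mul_delta_mx.
exact: psd_XX.
Qed.

Lemma delta_state n (i : 'I_n) : is_state (delta_mx i i : 'M[C]_n).
Proof.
split; first exact: delta_psd.
rewrite /mxtrace (bigD1 i) //= big1 ?addr0; first by rewrite mxE !eqxx.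
by move=> j /negPf ji; rewrite mxE ji.
Qed.

Lemma delta_diag n (i : 'I_n) : is_diag_mx (delta_mx i i : 'M[C]_n).
Proof.
apply/is_diag_mxP => x y; rewrite val_eqE => xy; rewrite mxE.
case: (eqVneq x i) => [xi|//]; case: (eqVneq y i) => [yi|//].
by move: xy; rewrite xi yi eqxx.
Qed.

Lemma IQ_single dX dY (s : 'M[C]_dX) (t : 'M[C]_dY) :
  is_state s -> is_diag_mx s -> is_state t -> IQ (s *t t).
Proof.
move=> ss ds st; exists 1%N, (fun _ => 1), (fun _ => s), (fun _ => t).
do 4 (split; first by rewrite ?big_ord1).
by rewrite big_ord1 scale1r.
Qed.

Lemma IQ_pure dX dY (i : 'I_dX) (t : 'M[C]_dY) :
  is_state t -> IQ (delta_mx i i *t t).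
Proof. by move=> st; apply: IQ_single => //; [apply: delta_state | apply: delta_diag]. Qed.

Lemma unif_state n : (0 < n)%N -> is_state ((n%:R^-1) *: (1%:M : 'M[C]_n)).
Proof.
move=> n0; split.
  by apply: psdZ; [rewrite invr_ge0 ler0n | apply: psd1].
by rewrite mxtraceZ mxtrace1 mulVf // pnatr_eq0 -lt0n.
Qed.

Lemma unif_diag n : is_diag_mx ((n%:R^-1) *: (1%:M : 'M[C]_n)).
Proof. by rewrite scalemx1 scalar_mx_is_diag. Qed.

Lemma IQ_unif dX dY : (0 < dX)%N -> (0 < dY)%N ->
  IQ (((dX * dY)%N%:R^-1) *: (1%:M : 'M[C]_(dX * dY))).
Proof.
move=> x0 y0.
have -> : ((dX * dY)%N%:R^-1) *: (1%:M : 'M[C]_(dX * dY)) =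
   ((dX%:R^-1) *: (1%:M : 'M[C]_dX)) *t ((dY%:R^-1) *: (1%:M : 'M[C]_dY)).
  by rewrite tensmxZl tensmxZr tens11 scalerA natrM invfM mulrC.
by apply: IQ_single; [apply: unif_state | apply: unif_diag | apply: unif_state].
Qed.

Definition feas dX dY (rho : 'M[C]_(dX * dY)) (l : R) :=
  exists s, IQ s /\ loewner_le rho (l%:C *: s).

Lemma feas_ge1 dX dY (rho : 'M[C]_(dX * dY)) l : is_state rho -> feas rho l -> 1 <= l.
Proof.
move=> [_ tr1] [s [/IQ_state [_ ts] /psd_tr_ge0]].
rewrite linearB /= mxtraceZ ts tr1 mulr1 subr_ge0.
by rewrite -rc1 lecR.
Qed.

End PartC.

Section PartD.
Variable R : realType.
Local Notation C := (R[i]).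
Local Notation "x %:C" := (real_complex R x) (format "x %:C").

Definition blk dX dY (i : 'I_dX) (Y : 'M[C]_(dX * dY)) : 'M[C]_dY :=
  \matrix_(a, b) Y (mxtens_index (i, a)) (mxtens_index (i, b)).

Definition cert dX dY (Y : 'M[C]_(dX * dY)) :=
  psd Y /\ forall i, psd (1%:M - blk i Y).

Definition emb dX dY (i : 'I_dX) (u : 'rV[C]_dY) : 'rV[C]_(dX * dY) :=
  \row_k (if (mxtens_unindex k).1 == i then u 0 (mxtens_unindex k).2 else 0).

Lemma sum_delta (V : nmodType) n (i : 'I_n) (F : 'I_n -> V) :
  \sum_a (if a == i then F a else 0) = F i.
Proof. by rewrite -big_mkcond big_pred1_eq. Qed.

Lemma qf_blk dX dY (i : 'I_dX) (u : 'rV[C]_dY) Y :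
  qf u (blk i Y) = qf (emb i u) Y.
Proof.
rewrite !qfE sum_tens_index.
rewrite (bigD1 i) //= [X in _ + X]big1 ?addr0; last first.
  move=> a /negPf ai; apply: big1 => b _; apply: big1 => k _.
  by rewrite !mxE mxtens_indexK /= ai !mul0r.
apply: eq_bigr => b _; rewrite sum_tens_index.
rewrite (bigD1 i) //= [X in _ + X]big1 ?addr0; last first.
  move=> a /negPf ai; apply: big1 => b' _.
  by rewrite !mxE !mxtens_indexK /= ai conjC0 mulr0.
by apply: eq_bigr => b' _; rewrite !mxE !mxtens_indexK /= !eqxx.
Qed.

Lemma blk_adj dX dY (i : 'I_dX) (Y : 'M[C]_(dX * dY)) : adjmx (blk i Y) = blk i (adjmx Y).
Proof. by apply/matrixP=> a b; rewrite !mxE. Qed.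

Lemma blk_psd dX dY (i : 'I_dX) (Y : 'M[C]_(dX * dY)) : psd Y -> psd (blk i Y).
Proof.
move=> [hY pY]; split; first by rewrite blk_adj hY.
move=> u; rewrite -[(_ *m _ *m _) 0 0]/(qf _ _) qf_blk; exact: pY.
Qed.

Lemma blk1 dX dY (i : 'I_dX) : blk i (1%:M : 'M[C]_(dX * dY)) = 1%:M.
Proof. by apply/matrixP=> a b; rewrite !mxE index_eq eqxx. Qed.

Lemma cert1 dX dY : cert (1%:M : 'M[C]_(dX * dY)).
Proof. by split; [apply: psd1 | move=> i; rewrite blk1 subrr; apply: psd0]. Qed.

Lemma tr_tens_blk dX dY (s : 'M[C]_dX) (t : 'M[C]_dY) (Y : 'M[C]_(dX * dY)) :
  is_diag_mx s ->
  \tr ((s *t t) *m Y) = \sum_a s a a * \tr (t *m blk a Y).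
Proof.
move=> /is_diag_mxP ds.
rewrite /mxtrace sum_tens_index; apply: eq_bigr => a _.
rewrite big_distrr /=; apply: eq_bigr => b _.
rewrite !mxE sum_tens_index (bigD1 a) //= [X in _ + X]big1 ?addr0; last first.
  move=> a' a'a; apply: big1 => b' _; rewrite tensmxE ds ?mul0r //.
  by rewrite val_eqE eq_sym.
rewrite big_distrr /=; apply: eq_bigr => b' _.
by rewrite tensmxE !mxE mulrA.
Qed.

Lemma cert_IQ dX dY (Y : 'M[C]_(dX * dY)) s : cert Y -> IQ s -> \tr (s *m Y) <= 1.
Proof.
move=> [pY pB] [K [p [sig [tau [p0 [p1 [hs [ht ->]]]]]]]].
rewrite mulmx_suml raddf_sum /= -rc1 -p1 rc_sum; apply: ler_sum => k _.
rewrite -scalemxAl mxtraceZ -[X in _ <= X]mulr1; apply: ler_wpM2l; first by rewrite rc_ge0.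
case: (hs k) => -[ps ts] ds; case: (ht k) => pt tt.
rewrite tr_tens_blk // -ts /mxtrace [X in _ <= X](eq_bigr (fun a => sig k a a * 1)); last by move=> *; rewrite mulr1.
apply: ler_sum => a _; apply: ler_wpM2l; first exact: psd_diag_ge0.
have := tr_psd_mul pt (pB a); rewrite mulmxBr mulmx1 linearB /= subr_ge0.
by rewrite tt.
Qed.

Lemma cert_feas dX dY (Y : 'M[C]_(dX * dY)) rho l :
  cert Y -> feas rho l -> 0 <= l -> \tr (rho *m Y) <= l%:C.
Proof.
move=> cY [s [iqs ple]] l0.
have := tr_psd_mul ple cY.1; rewrite mulmxBl linearB /= subr_ge0 -scalemxAl mxtraceZ => h.
apply: (le_trans h); rewrite -[X in _ <= X]mulr1; apply: ler_wpM2l; first by rewrite rc_ge0.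
exact: cert_IQ.
Qed.

Lemma blk_ro_tens a1 b1 a2 b2 (Y1 : 'M[C]_(a1 * b1)) (Y2 : 'M[C]_(a2 * b2)) i1 i2 :
  blk (mxtens_index (i1, i2)) (reorder (Y1 *t Y2)) = blk i1 Y1 *t blk i2 Y2.
Proof.
apply/matrixP=> b b'; case: (mxtens_indexP b) => x1 x2; case: (mxtens_indexP b') => z1 z2.
rewrite [RHS]tensmxE [LHS]mxE roE !rrE tensmxE. by rewrite !mxE.
Qed.

Lemma cert_tens a1 b1 a2 b2 (Y1 : 'M[C]_(a1 * b1)) (Y2 : 'M[C]_(a2 * b2)) :
  cert Y1 -> cert Y2 -> cert (reorder (Y1 *t Y2)).
Proof.
move=> [p1 c1] [p2 c2]; split; first by apply: psd_ro; apply: psd_tens.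
move=> i; case: (mxtens_indexP i) => i1 i2; rewrite blk_ro_tens.
have -> : 1%:M - blk i1 Y1 *t blk i2 Y2 =
  (1%:M - blk i1 Y1) *t 1%:M + blk i1 Y1 *t (1%:M - blk i2 Y2).
  by rewrite tensmxBl tensmxBr tens11 addrA subrK.
apply: psdD; apply: psd_tens => //; [exact: psd1 | exact: blk_psd].
Qed.

Lemma tr_ro_tens a1 b1 a2 b2 (r1 Y1 : 'M[C]_(a1 * b1)) (r2 Y2 : 'M[C]_(a2 * b2)) :
  \tr (reorder (r1 *t r2) *m reorder (Y1 *t Y2)) = \tr (r1 *m Y1) * \tr (r2 *m Y2).
Proof. by rewrite ro_mul ro_tr tensmx_mul tr_tens. Qed.

End PartD.

Section PartE1.
Variable R : realType.
Local Notation C := (R[i]).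
Local Notation "x %:C" := (real_complex R x) (format "x %:C").
Local Notation RE := (@complex.Re R).
Local Notation IM := (@complex.Im R).

Lemma RED (x y : C) : RE (x + y) = RE x + RE y. Proof. by case: x; case: y. Qed.
Lemma REN (x : C) : RE (- x) = - RE x. Proof. by case: x. Qed.
Lemma REB (x y : C) : RE (x - y) = RE x - RE y. Proof. by rewrite RED REN. Qed.
Lemma RE_sum (I : finType) (F : I -> C) : RE (\sum_i F i) = \sum_i RE (F i).
Proof. exact: (big_morph _ RED (erefl _)). Qed.
Lemma REZ (k : R) (x : C) : RE (k%:C * x) = k * RE x.
Proof. by case: x => a b /=; rewrite mul0r subr0. Qed.
Lemma RErc (k : R) : RE k%:C = k. Proof. by []. Qed.
Lemma RE1 : RE 1 = 1. Proof. by []. Qed.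
Lemma RE_conj (x : C) : RE (Num.conj x) = RE x. Proof. by case: x. Qed.
Lemma conj_rc (k : R) : Num.conj k%:C = k%:C.
Proof. exact: (conjc_real k). Qed.
Lemma RE_mulJ (x y : C) : RE (x * Num.conj y) = RE (y * Num.conj x).
Proof. by case: x => a b; case: y => c d /=; ring. Qed.
Lemma RE_mulJ_ge0 (x : C) : 0 <= RE (x * Num.conj x).
Proof. by case: x => a b /=; nra. Qed.

Lemma ge0_C (x : C) : Num.conj x = x -> 0 <= RE x -> 0 <= x.
Proof.
case: x => a b /= [] hb ha; rewrite lecE /= ha andbT.
by apply/eqP; lra.
Qed.

Lemma real_C (x : C) : Num.conj x = x -> x = (RE x)%:C.
Proof. by case: x => a b /= [] hb; congr Complex; lra. Qed.

Definition ip n (A B : 'M[C]_n) : R := RE (\sum_i \sum_j A i j * Num.conj (B i j)).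
Definition nrm n (A : 'M[C]_n) := ip A A.

Lemma ipE n (A B : 'M[C]_n) : ip A B = \sum_i \sum_j RE (A i j * Num.conj (B i j)).
Proof. by rewrite /ip RE_sum; apply: eq_bigr => i _; rewrite RE_sum. Qed.

Lemma ipC n (A B : 'M[C]_n) : ip A B = ip B A.
Proof. by rewrite !ipE; apply: eq_bigr => i _; apply: eq_bigr => j _; rewrite RE_mulJ. Qed.

Lemma ipDl n (A B D : 'M[C]_n) : ip (A + B) D = ip A D + ip B D.
Proof.
rewrite !ipE -big_split; apply: eq_bigr => i _; rewrite -big_split; apply: eq_bigr => j _.
by rewrite mxE mulrDl RED.
Qed.

Lemma ipZl n (k : R) (A D : 'M[C]_n) : ip (k%:C *: A) D = k * ip A D.
Proof.
rewrite !ipE mulr_sumr; apply: eq_bigr => i _; rewrite mulr_sumr; apply: eq_bigr => j _.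
by rewrite mxE -mulrA REZ.
Qed.

Lemma ipNl n (A D : 'M[C]_n) : ip (- A) D = - ip A D.
Proof.
have -> : - A = (-1)%:C *: A by rewrite rmorphN rmorph1 scaleN1r.
by rewrite ipZl mulN1r.
Qed.

Lemma ipBl n (A B D : 'M[C]_n) : ip (A - B) D = ip A D - ip B D.
Proof. by rewrite ipDl ipNl. Qed.

Lemma ipDr n (A B D : 'M[C]_n) : ip D (A + B) = ip D A + ip D B.
Proof. by rewrite ipC ipDl ![ip _ D]ipC. Qed.
Lemma ipZr n (k : R) (A D : 'M[C]_n) : ip D (k%:C *: A) = k * ip D A.
Proof. by rewrite ipC ipZl ipC. Qed.
Lemma ipNr n (A D : 'M[C]_n) : ip D (- A) = - ip D A.
Proof. by rewrite ipC ipNl ipC. Qed.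
Lemma ipBr n (A B D : 'M[C]_n) : ip D (A - B) = ip D A - ip D B.
Proof. by rewrite ipDr ipNr. Qed.
Lemma ip0l n (D : 'M[C]_n) : ip 0 D = 0.
Proof. by rewrite ipE big1 // => i _; rewrite big1 // => j _; rewrite mxE mul0r. Qed.

Lemma nrm_ge0 n (A : 'M[C]_n) : 0 <= nrm A.
Proof. by rewrite /nrm ipE; apply: sumr_ge0 => i _; apply: sumr_ge0 => j _; apply: RE_mulJ_ge0. Qed.

Lemma nrmDZ n (A B : 'M[C]_n) (k : R) :
  nrm (A + k%:C *: B) = nrm A + 2 * k * ip A B + k ^+ 2 * nrm B.
Proof.
rewrite /nrm !ipDl !ipDr !ipZl !ipZr [ip B A]ipC; ring.
Qed.

Lemma nrm_par n (A B : 'M[C]_n) : nrm (A - B) <= 2 * nrm A + 2 * nrm B.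
Proof.
have h : nrm (A - B) + nrm (A + B) = 2 * nrm A + 2 * nrm B.
  rewrite /nrm !ipDl !ipNl !ipDr !ipNr [ip B A]ipC; ring.
have := nrm_ge0 (A + B); lra.
Qed.

Lemma ip_XX n (Y : 'M[C]_n) (v : 'rV[C]_n) : ip Y (adjmx v *m v) = RE (qf v Y).
Proof.
rewrite ipE qfE RE_sum; apply: eq_bigr => i _; rewrite RE_sum; apply: eq_bigr => j _.
rewrite !mxE big_ord1 !mxE rmorphM /= conjCK; congr RE; rewrite [ord0]ord1; ring.
Qed.

Lemma ip_tr n (A B : 'M[C]_n) : adjmx B = B -> ip A B = RE (\tr (A *m B)).
Proof.
move=> hB; rewrite /ip /mxtrace; congr RE; apply: eq_bigr => i _.
rewrite mxE; apply: eq_bigr => j _; rewrite -{2}hB !mxE //.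
Qed.

Definition nv n (v : 'rV[C]_n) : R := RE ((v *m adjmx v) 0 0).

Lemma nvE n (v : 'rV[C]_n) : nv v = \sum_i RE (v 0 i * Num.conj (v 0 i)).
Proof. by rewrite /nv mxE RE_sum; apply: eq_bigr => i _; rewrite !mxE. Qed.

Lemma nv_ge0 n (v : 'rV[C]_n) : 0 <= nv v.
Proof. by rewrite nvE; apply: sumr_ge0 => i _; apply: RE_mulJ_ge0. Qed.

Lemma nv_gt0 n (v : 'rV[C]_n) : v != 0 -> 0 < nv v.
Proof.
move=> vn0; rewrite lt_neqAle nv_ge0 andbT; apply/negP => /eqP h0.
move/negP: vn0; apply; apply/eqP/rowP => i.
move: h0 => /esym /eqP; rewrite nvE psumr_eq0 => [|j _]; last exact: RE_mulJ_ge0.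
move=> /allP /(_ i (mem_index_enum _)) /=; rewrite mxE.
case: (v 0 i) => a b /= /eqP h.
have ha : a = 0 by apply/eqP; rewrite -sqrf_eq0; apply/eqP; nra.
have hb : b = 0 by apply/eqP; rewrite -sqrf_eq0; apply/eqP; nra.
by rewrite ha hb.
Qed.

Lemma qf1 n (v : 'rV[C]_n) : qf v 1%:M = (v *m adjmx v) 0 0.
Proof. by rewrite /qf mulmx1. Qed.

Lemma nrm_XX n (v : 'rV[C]_n) : nrm (adjmx v *m v) = nv v ^+ 2.
Proof.
rewrite /nrm ip_XX /qf.
set w := v *m adjmx v.
have -> : v *m (adjmx v *m v) *m adjmx v = w *m w by rewrite /w !mulmxA.
have hw : Num.conj (w 0 0) = w 0 0.
  have : adjmx w = w by rewrite /w adjmx_mul adjmxK.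
  by move/matrixP => /(_ 0 0); rewrite !mxE.
rewrite mxE big_ord1 [ord0]ord1 (real_C hw) REZ /= -/(nv v) expr2 //.
Qed.

Lemma conjE (x : C) : Num.conj x = conjc x. Proof. by []. Qed.

Lemma RE_term (a b : C) :
  RE (a * b * Num.conj (a * b)) = RE (a * Num.conj a) * RE (b * Num.conj b).
Proof. rewrite !conjE; case: a => a1 a2; case: b => b1 b2 /=; ring. Qed.

Lemma nrm_tens m n (A : 'M[C]_m) (B : 'M[C]_n) : nrm (A *t B) = nrm A * nrm B.
Proof.
rewrite /nrm !ipE sum_tens_index big_distrl /=; apply: eq_bigr => i _.
under eq_bigr do rewrite sum_tens_index.
rewrite exchange_big big_distrl /=; apply: eq_bigr => k _.
rewrite mulr_sumr; apply: eq_bigr => j _.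
rewrite mulr_sumr; apply: eq_bigr => l _.
by rewrite tensmxE RE_term.
Qed.

Lemma nrm_delta n (i : 'I_n) : nrm (delta_mx i i : 'M[C]_n) = 1.
Proof.
rewrite /nrm ipE (bigD1 i) //= [X in _ + X]big1 ?addr0; last first.
  move=> k /negPf ki; apply: big1 => j _; by rewrite mxE ki mul0r.
rewrite (bigD1 i) //= [X in _ + X]big1 ?addr0; last first.
  move=> k /negPf ki; by rewrite mxE ki andbF mul0r.
by rewrite mxE !eqxx /=; lra.
Qed.

Lemma ip_blk dX dY (Y : 'M[C]_(dX * dY)) (i : 'I_dX) (u : 'rV[C]_dY) :
  ip Y (delta_mx i i *t (adjmx u *m u)) = RE (qf u (blk i Y)).
Proof.
rewrite -ip_XX !ipE sum_tens_index (bigD1 i) //= [X in _ + X]big1 ?addr0; last first.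
  move=> k ki; apply: big1 => j _; rewrite sum_tens_index.
  apply: big1 => y1 _; apply: big1 => y2 _.
  rewrite tensmxE mxE; move: ki; case: eqP => //= _ _.
  by rewrite mul0r conjC0 mulr0.
apply: eq_bigr => b _; rewrite sum_tens_index (bigD1 i) //= [X in _ + X]big1 ?addr0; last first.
  move=> k ki; apply: big1 => b' _.
  rewrite tensmxE mxE; move: ki; case: (eqVneq k i) => //= _ _.
  by rewrite andbF mul0r conjC0 mulr0.
by apply: eq_bigr => b' _; rewrite tensmxE !mxE !eqxx mul1r.
Qed.

Lemma ip1 n (B : 'M[C]_n) : adjmx B = B -> ip 1%:M B = RE (\tr B).
Proof. by move=> hB; rewrite ip_tr // mul1mx. Qed.

End PartE1.

Section PartE2.
Variable R : realType.
Local Notation C := (R[i]).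
Local Notation "x %:C" := (real_complex R x) (format "x %:C").
Local Notation RE := (@complex.Re R).

Lemma qfD n (v : 'rV[C]_n) A B : qf v (A + B) = qf v A + qf v B.
Proof. by rewrite /qf mulmxDr mulmxDl mxE. Qed.
Lemma qfN n (v : 'rV[C]_n) A : qf v (- A) = - qf v A.
Proof. by rewrite /qf mulmxN mulNmx mxE. Qed.
Lemma qfB n (v : 'rV[C]_n) A B : qf v (A - B) = qf v A - qf v B.
Proof. by rewrite qfD qfN. Qed.
Lemma qfZ n (v : 'rV[C]_n) (k : C) A : qf v (k *: A) = k * qf v A.
Proof. by rewrite /qf -scalemxAr -scalemxAl mxE. Qed.
Lemma qf0v n (A : 'M[C]_n) : qf 0 A = 0.
Proof. by rewrite /qf !mul0mx mxE. Qed.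
Lemma nv0 n : nv (0 : 'rV[C]_n) = 0.
Proof. by rewrite /nv mul0mx mxE. Qed.
Lemma REqf1 n (v : 'rV[C]_n) : RE (qf v 1%:M) = nv v.
Proof. by rewrite qf1. Qed.

Lemma psd_crit n (A : 'M[C]_n) : adjmx A = A -> (forall v, 0 <= RE (qf v A)) -> psd A.
Proof.
move=> hA H; split => // v; apply: ge0_C; [exact: qf_herm_real | exact: H].
Qed.

Lemma sq_bound (X Y : R) : 0 <= Y -> X ^+ 2 <= Y ^+ 2 -> X <= Y.
Proof.
move=> Y0 h; case: (lerP X 0) => [hX0|hX0]; first exact: (le_trans hX0).
by rewrite -ler_sqr // ?nnegrE //; apply: ltW.
Qed.

Lemma term_bound_R (e1 e2 w1 w2 a b d : R) : 0 <= d -> e1 ^+ 2 + e2 ^+ 2 <= d ^+ 2 ->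
  0 <= a -> 0 <= b -> w1 ^+ 2 + w2 ^+ 2 = a * b ->
  e1 * w1 - e2 * w2 <= d * (a + b) / 2.
Proof.
move=> d0 he a0 b0 hw.
have Y0 : 0 <= d * (a + b) / 2 by apply: mulr_ge0; [apply: mulr_ge0 => //; lra | lra].
apply: sq_bound => //.
have id : (e1 * w1 - e2 * w2) ^+ 2 + (e1 * w2 + e2 * w1) ^+ 2 =
    (e1 ^+ 2 + e2 ^+ 2) * (w1 ^+ 2 + w2 ^+ 2) by ring.
have cs : (e1 * w1 - e2 * w2) ^+ 2 <= (e1 ^+ 2 + e2 ^+ 2) * (w1 ^+ 2 + w2 ^+ 2).
  by rewrite -id; have := sqr_ge0 (e1 * w2 + e2 * w1); lra.
apply: (le_trans cs); rewrite hw.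
have amgm : a * b <= ((a + b) / 2) ^+ 2.
  have id2 : ((a + b) / 2) ^+ 2 = a * b + ((a - b) / 2) ^+ 2 by field.
  rewrite id2; have := sqr_ge0 ((a - b) / 2); lra.
have ab0 : 0 <= a * b by apply: mulr_ge0.
apply: le_trans (_ : d ^+ 2 * (a * b) <= _); first exact: ler_wpM2r.
have -> : (d * (a + b) / 2) ^+ 2 = d ^+ 2 * ((a + b) / 2) ^+ 2 by ring.
by apply: ler_wpM2l => //; apply: sqr_ge0.
Qed.

Lemma term_bound (x e y : C) (d : R) : 0 <= d -> RE (e * Num.conj e) <= d ^+ 2 ->
  RE (x * e * Num.conj y) <= d * (RE (x * Num.conj x) + RE (y * Num.conj y)) / 2.
Proof.
rewrite !conjE; case: x => x1 x2; case: e => e1 e2; case: y => y1 y2 /= d0 he.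
have -> : (x1 * e1 - x2 * e2) * y1 - (x1 * e2 + x2 * e1) * - y2 =
  e1 * (x1 * y1 + x2 * y2) - e2 * (x2 * y1 - x1 * y2) by ring.
have -> : x1 * x1 - x2 * - x2 = x1 ^+ 2 + x2 ^+ 2 by ring.
have -> : y1 * y1 - y2 * - y2 = y1 ^+ 2 + y2 ^+ 2 by ring.
apply: term_bound_R => //.
- by move: he; have -> : e1 * e1 - e2 * - e2 = e1 ^+ 2 + e2 ^+ 2 by ring.
- by apply: addr_ge0; apply: sqr_ge0.
- by apply: addr_ge0; apply: sqr_ge0.
- ring.
Qed.

Lemma term_le_nrm n (E : 'M[C]_n) i j : RE (E i j * Num.conj (E i j)) <= nrm E.
Proof.
rewrite /nrm ipE (bigD1 i) //= -[X in X <= _]addr0; apply: lerD; last first.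
  by apply: sumr_ge0 => k _; apply: sumr_ge0 => l _; apply: RE_mulJ_ge0.
rewrite (bigD1 j) //= -[X in X <= _]addr0; apply: lerD => //.
by apply: sumr_ge0 => l _; apply: RE_mulJ_ge0.
Qed.

Lemma sum_pair_avg n (a : 'I_n -> R) :
  \sum_i \sum_j (a i + a j) = 2 * n%:R * \sum_i a i.
Proof.
set S := \sum_i a i.
rewrite (eq_bigr (fun i => a i * n%:R + S)); last first.
  by move=> i _; rewrite big_split /= sumr_const card_ord mulr_natr.
rewrite big_split /= -mulr_suml sumr_const card_ord -/S mulr_natr; ring.
Qed.

Lemma margin_psd n (E : 'M[C]_n) (d : R) : adjmx E = E -> 0 <= d -> nrm E <= d ^+ 2 ->
  psd ((n%:R * d)%:C *: 1%:M - E).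
Proof.
move=> hE d0 nE; apply: psd_crit.
  by rewrite adjmxB adjmxZ adjmx1 conj_rc hE.
move=> v; rewrite qfB qfZ REB REZ REqf1 subr_ge0 qfE RE_sum.
apply: le_trans (_ : \sum_(i < n) \sum_(j < n) d * (RE (v 0 i * Num.conj (v 0 i)) + RE (v 0 j * Num.conj (v 0 j))) / 2 <= _).
  apply: ler_sum => i _; rewrite RE_sum; apply: ler_sum => j _.
  apply: term_bound => //; exact: (le_trans (term_le_nrm E i j)).
rewrite (eq_bigr (fun i => d / 2 * \sum_(j < n) (RE (v 0 i * Num.conj (v 0 i)) + RE (v 0 j * Num.conj (v 0 j))))); last first.
  by move=> i _; rewrite mulr_sumr; apply: eq_bigr => j _; rewrite mulrAC.
rewrite -mulr_sumr sum_pair_avg.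
suff -> : d / 2 * (2 * n%:R * \sum_(i < n) RE (v 0 i * Num.conj (v 0 i))) = n%:R * d * nv v by [].
by rewrite nvE; field.
Qed.

End PartE2.

Section PartE3.
Variable R : realType.
Local Notation C := (R[i]).
Local Notation "x %:C" := (real_complex R x) (format "x %:C").
Local Notation RE := (@complex.Re R).

Lemma approx_min (T : Type) (P : T -> Prop) (f : T -> R) (e : R) :
  (exists x, P x) -> (forall x, P x -> 0 <= f x) -> 0 < e ->
  exists x, P x /\ forall z, P z -> f x <= f z + e.
Proof.
move=> [x0 Px0] f0 e0.
pose S : set R := fun r => exists2 x, P x & r = f x.
have hS : has_inf S.
  split; first by exists (f x0); exists x0.
  by exists 0 => r [x Px ->]; apply: f0.
have [r [x Px ->] rlt] := inf_adherent e0 hS.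
exists x; split => // z Pz.
have : inf S <= f z by apply: (ge_inf hS.2); exists z.
move=> h; apply: ltW; apply: (lt_le_trans rlt); by rewrite lerD2r.
Qed.

Lemma blkD dX dY (i : 'I_dX) (A B : 'M[C]_(dX * dY)) : blk i (A + B) = blk i A + blk i B.
Proof. by apply/matrixP=> a b; rewrite !mxE. Qed.
Lemma blkZ dX dY (i : 'I_dX) (k : C) (A : 'M[C]_(dX * dY)) : blk i (k *: A) = k *: blk i A.
Proof. by apply/matrixP=> a b; rewrite !mxE. Qed.

Lemma ge0_real (x : C) : 0 <= x -> x = (RE x)%:C.
Proof. by case: x => a b; rewrite lecE /= => /andP[/eqP -> _]. Qed.

Lemma nrmZ n (k : R) (A : 'M[C]_n) : nrm (k%:C *: A) = k ^+ 2 * nrm A.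
Proof. by rewrite /nrm ipZl ipZr mulrA expr2. Qed.

Lemma tr_XX n (u : 'rV[C]_n) : \tr (adjmx u *m u) = (nv u)%:C.
Proof.
rewrite mxtrace_mulC /mxtrace big_ord1.
have hw : Num.conj ((u *m adjmx u) 0 0) = (u *m adjmx u) 0 0.
  have : adjmx (u *m adjmx u) = u *m adjmx u by rewrite adjmx_mul adjmxK.
  by move/matrixP => /(_ 0 0); rewrite !mxE.
by rewrite [ord0]ord1 (real_C hw).
Qed.

Lemma herm_state n (A : 'M[C]_n) : is_state A -> adjmx A = A.
Proof. by case=> -[]. Qed.

Lemma near_feas dX dY (rho : 'M[C]_(dX * dY)) mu s P d :
  (0 < dX)%N -> (0 < dY)%N -> adjmx rho = rho -> 0 <= mu -> IQ s -> psd P -> 0 < d ->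
  nrm (rho - (mu%:C *: s - P)) <= d ^+ 2 ->
  feas rho (mu + (dX * dY)%N%:R * ((dX * dY)%N%:R * d)).
Proof.
move=> x0 y0 hr m0 iqs pP d0 nE.
have iqu := @IQ_unif R _ _ x0 y0.
move: iqu nE; set n := (dX * dY)%N => iqu nE.
have n0 : (0 < n)%N by rewrite muln_gt0 x0.
have nR : 0 < n%:R :> R by rewrite ltr0n.
set k := n%:R * d.
set E := rho - (mu%:C *: s - P).
have hs : adjmx s = s by have [[]] := IQ_state iqs.
have hE : adjmx E = E by rewrite /E !adjmxB adjmxZ conj_rc hs hr (psd_herm pP).
have pE := margin_psd hE (ltW d0) nE.
set l := mu + n%:R * k.
have k0 : 0 < k by apply: mulr_gt0.
have l0 : 0 < l by apply: ltr_wpDl => //; apply: mulr_gt0.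
set a := mu / l.
have a01 : 0 <= a <= 1.
  apply/andP; split; first by apply: divr_ge0 => //; apply: ltW.
  rewrite ler_pdivrMr // mul1r /l lerDl; apply: mulr_ge0; apply: ltW => //.
exists (a%:C *: s + (1 - a)%:C *: ((n%:R^-1) *: 1%:M)); split; first exact: IQ_conv.
rewrite /loewner_le.
have e1 : l * a = mu by rewrite /a mulrC divfK // gt_eqF.
have e2 : (l * (1 - a))%:C * (n%:R : C)^-1 = k%:C.
  have -> : l * (1 - a) = n%:R * k by rewrite mulrBr e1 mulr1 /l addrC addKr.
  rewrite rmorphM rmorph_nat mulrAC divff ?mul1r //.
  by rewrite pnatr_eq0 -lt0n.
have -> : l%:C *: (a%:C *: s + (1 - a)%:C *: ((n%:R^-1) *: 1%:M)) - rho =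
    (k%:C *: 1%:M - E) + P.
  rewrite scalerDr !scalerA -!rmorphM e1 -e2 /E.
  apply/matrixP => i j; rewrite !mxE; ring.
exact: psdD.
Qed.

End PartE3.

Section PartE4.
Variable R : realType.
Local Notation C := (R[i]).
Local Notation "x %:C" := (real_complex R x) (format "x %:C").
Local Notation RE := (@complex.Re R).

Lemma state_dims dX dY (rho : 'M[C]_(dX * dY)) : is_state rho -> (0 < dX)%N /\ (0 < dY)%N.
Proof.
move=> [_ tr1]; suff : (0 < dX * dY)%N by rewrite muln_gt0 => /andP.
case: (posnP (dX * dY)) => // hn.
have F : forall i : 'I_(dX * dY), False by case=> i hi; move: hi; rewrite hn.
move: tr1; rewrite /mxtrace big1 => [/esym/eqP|i]; last by case: (F i).
by rewrite oner_eq0.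
Qed.

Definition inC dX dY (t : R) (c : 'M[C]_(dX * dY)) :=
  exists mu s P, (0 <= mu <= t) /\ IQ s /\ psd P /\ c = mu%:C *: s - P.

Lemma inC_herm dX dY t (c : 'M[C]_(dX * dY)) : inC t c -> adjmx c = c.
Proof.
move=> [mu [s [P [_ [iqs [pP ->]]]]]].
have hs : adjmx s = s by have [[]] := IQ_state iqs.
by rewrite adjmxB adjmxZ conj_rc hs (psd_herm pP).
Qed.

Lemma dual_main dX dY (rho : 'M[C]_(dX * dY)) (t T : R) :
  is_state rho -> 1 <= t -> t < T -> (forall l, l < T -> ~ feas rho l) ->
  exists Y, cert Y /\ t%:C <= \tr (rho *m Y).
Proof.
move=> st t1 tT nf.
have [x0 y0] := state_dims st.
have hr : adjmx rho = rho := herm_state st.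
have iqu := @IQ_unif R _ _ x0 y0.
move: iqu nf; set n := (dX * dY)%N => iqu nf.
have n0 : (0 < n)%N by rewrite muln_gt0 x0.
set nn : R := n%:R.
have nn1 : 1 <= nn by rewrite /nn ler1n.
have nn0 : 0 < nn by lra.
have p2 : 0 < 2 * nn * nn by apply: mulr_gt0 => //; apply: mulr_gt0 => //; lra.
pose d := Num.min 1 ((T - t) / (2 * nn * nn)).
have d0 : 0 < d by rewrite lt_min ltr01 /=; apply: divr_gt0 => //; lra.
have d1 : d <= 1 by rewrite ge_min lexx.
have dT : t + nn * (nn * d) < T.
  have : d <= (T - t) / (2 * nn * nn) by rewrite ge_min lexx orbT.
  rewrite ler_pdivlMr //.
  move=> h; have : nn * (nn * d) = d * (2 * nn * nn) / 2 by field.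
  move=> ->; lra.
have C0 : inC t (0 : 'M[C]_n).
  exists 0, ((n%:R^-1) *: 1%:M), 0; split; first by rewrite lexx /=; lra.
  split => //; split; first exact: psd0.
  by rewrite scale0r subr0.
have margin : forall c, inC t c -> d ^+ 2 <= nrm (rho - c).
  move=> c [mu [s [P [/andP [m0 mt] [iqs [pP ->]]]]]].
  rewrite leNgt; apply/negP => lt.
  apply: (nf (mu + nn * (nn * d))); first lra.
  by apply: (@near_feas R dX dY rho mu s P d) => //; apply: ltW.
pose R0 := nrm rho.
have R00 : 0 <= R0 := nrm_ge0 rho.
pose B := 2 * t ^+ 2 + 2 * (4 * R0 + 2).
have t2 : 0 <= t ^+ 2 := sqr_ge0 t.
have B0 : 0 <= B by rewrite /B; lra.
pose den := (1 + B) / 2 + t.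
have den1 : 1 <= den by rewrite /den; lra.
have den0 : 0 < den by lra.
pose s := d ^+ 2 / den.
have d2 : 0 < d ^+ 2 := exprn_gt0 2 d0.
have d21 : d ^+ 2 <= 1 by apply: exprn_ile1; [apply: ltW | ].
have s0 : 0 < s by apply: divr_gt0.
have s1 : s <= 1 by rewrite /s ler_pdivrMr // mul1r; lra.
have sden : s * den = d ^+ 2 by rewrite /s divfK // gt_eqF.
have s2 : 0 < s ^+ 2 := exprn_gt0 2 s0.
clearbody s.
have s21 : s ^+ 2 <= 1 by apply: exprn_ile1; [apply: ltW | ].
have [c [inc cmin]] := approx_min (ex_intro (inC t) 0 C0)
   (fun c (_ : inC t c) => nrm_ge0 (rho - c)) s2.
set y := rho - c.
have hy : adjmx y = y by rewrite /y adjmxB hr (inC_herm inc).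
have ny1 : nrm y <= R0 + s ^+ 2 by have := cmin 0 C0; rewrite subr0.
have ny2 : d ^+ 2 <= nrm y := margin c inc.
have nc : nrm c <= 4 * R0 + 2.
  have -> : c = rho - y by rewrite /y opprB addrC subrK.
  have := nrm_par rho y; rewrite -/R0; lra.
pose h := ip y c.
case: (inc) => mu [sg [P [/andP[m0 mt] [iqs [pP ceq]]]]].
have hsg : adjmx sg = sg by have [[]] := IQ_state iqs.
have F3 : 0 <= 2 * h + s * (1 + B).
  have inc' : inC t ((1 - s)%:C *: c).
    exists ((1 - s) * mu), sg, ((1 - s)%:C *: P); split.
      apply/andP; split; first by apply: mulr_ge0 => //; lra.
      by apply: le_trans mt; apply: ler_piMl => //; lra.
    split => //; split; first by apply: psdZ => //; rewrite rc_ge0; lra.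
    by rewrite ceq scalerBr scalerA -rmorphM.
  have := cmin _ inc'.
  have -> : rho - (1 - s)%:C *: c = y + s%:C *: c.
    by rewrite /y rmorphB rmorph1; apply/matrixP => i j; rewrite !mxE; ring.
  rewrite nrmDZ -/h => hc.
  have hc' : 0 <= s * (2 * h + s * (nrm c + 1)).
    have -> : s * (2 * h + s * (nrm c + 1)) =
      (nrm y + 2 * s * h + s ^+ 2 * nrm c + s ^+ 2) - nrm y by ring.
    by rewrite subr_ge0.
  rewrite pmulr_rge0 // in hc'.
  have : s * (nrm c + 1) <= s * (1 + B) by apply: ler_wpM2l; [apply: ltW | rewrite /B; lra].
  lra.
have F1 : forall v : 'rV[C]_n, 0 <= RE (qf v y) + s * nv v.
  move=> v; case: (eqVneq v 0) => [->|vn0]; first by rewrite qf0v nv0 mulr0 addr0.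
  have nvp := nv_gt0 vn0.
  set Pv := adjmx v *m v; set s' := s / nv v.
  have s'0 : 0 < s' by apply: divr_gt0.
  have es : s = s' * nv v by rewrite /s' divfK // gt_eqF.
  have inc' : inC t (c - s'%:C *: Pv).
    exists mu, sg, (P + s'%:C *: Pv); split; first by rewrite m0 mt.
    split => //; split.
      by apply: psdD => //; apply: psdZ; [rewrite rc_ge0; apply: ltW | apply: psd_XX].
    by rewrite ceq opprD addrA.
  have := cmin _ inc'.
  have -> : rho - (c - s'%:C *: Pv) = y + s'%:C *: Pv.
    by apply/matrixP => i j; rewrite !mxE; ring.
  rewrite nrmDZ ip_XX nrm_XX => hc.
  have key : 0 <= 2 * s' * (RE (qf v y) + s' * nv v * nv v).
    have -> : 2 * s' * (RE (qf v y) + s' * nv v * nv v) =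
      (nrm y + 2 * s' * RE (qf v y) + s' ^+ 2 * nv v ^+ 2 + (s' * nv v) ^+ 2) - nrm y by ring.
    by rewrite -es subr_ge0.
  rewrite pmulr_rge0 in key; last by apply: mulr_gt0.
  by rewrite es.
have t0 : 0 < t by lra.
pose tau (u : 'rV[C]_dY) := ((nv u)^-1)%:C *: (adjmx u *m u).
pose pi (i : 'I_dX) (u : 'rV[C]_dY) := delta_mx i i *t tau u.
have st_tau : forall u, u != 0 -> is_state (tau u).
  move=> u un0; have nup := nv_gt0 un0; split.
    by apply: psdZ; [rewrite rc_ge0 invr_ge0; apply: ltW | apply: psd_XX].
  by rewrite mxtraceZ tr_XX -rmorphM mulVf // gt_eqF.
have F2 : forall i u, u != 0 -> 2 * (t * ip y (pi i u) - h) <= s * (1 + B).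
  move=> i u un0; have nup := nv_gt0 un0.
  have iqp : IQ (pi i u) by apply: IQ_pure; apply: st_tau.
  have np : nrm (pi i u) = 1.
    rewrite /pi /tau nrm_tens nrm_delta nrmZ nrm_XX mul1r; field; by rewrite (gt_eqF nup).
  set mu' := (1 - s) * mu + s * t.
  have st0 : 0 < s * t by apply: mulr_gt0.
  have smu0 : 0 <= (1 - s) * mu by apply: mulr_ge0 => //; lra.
  have mu'0 : 0 < mu' by rewrite /mu'; lra.
  have mu't : mu' <= t.
    have : (1 - s) * mu <= (1 - s) * t by apply: ler_wpM2l => //; lra.
    rewrite /mu'; lra.
  set a := (1 - s) * mu / mu'.
  have ea : mu' * a = (1 - s) * mu by rewrite /a mulrC divfK // gt_eqF.
  have eb : mu' * (1 - a) = s * t by rewrite mulrBr mulr1 ea /mu'; ring.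
  have a01 : 0 <= a <= 1.
    apply/andP; split; first by apply: divr_ge0 => //; apply: ltW.
    by rewrite /a ler_pdivrMr // mul1r /mu'; lra.
  have inc' : inC t ((1 - s)%:C *: c + (s * t)%:C *: pi i u).
    exists mu', (a%:C *: sg + (1 - a)%:C *: pi i u), ((1 - s)%:C *: P); split.
      by rewrite mu't andbT; apply: ltW.
    split; first exact: IQ_conv.
    split; first by apply: psdZ => //; rewrite rc_ge0; lra.
    rewrite scalerDr !scalerA -!rmorphM ea eb ceq rmorphM.
    by apply/matrixP => k l; rewrite !mxE; ring.
  have := cmin _ inc'.
  set w := t%:C *: pi i u - c.
  have -> : rho - ((1 - s)%:C *: c + (s * t)%:C *: pi i u) = y + (- s)%:C *: w.
    have e1 : (1 - s)%:C = 1 - s%:C by rewrite rmorphB.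
    have e2 : (s * t)%:C = s%:C * t%:C by rewrite rmorphM.
    have e3 : (- s)%:C = - s%:C by rewrite rmorphN.
    rewrite /y /w e1 e2 e3.
    by apply/matrixP => k l; rewrite !mxE; ring.
  rewrite nrmDZ => hc.
  have ipw : ip y w = t * ip y (pi i u) - h by rewrite /w ipBr ipZr.
  have nw : nrm w <= B.
    have := nrm_par (t%:C *: pi i u) c; rewrite nrmZ np mulr1 -/w.
    rewrite /B; lra.
  have key : 0 <= s * (s * (nrm w + 1) - 2 * ip y w).
    have -> : s * (s * (nrm w + 1) - 2 * ip y w) =
      (nrm y + 2 * (- s) * ip y w + (- s) ^+ 2 * nrm w + s ^+ 2) - nrm y by ring.
    by rewrite subr_ge0.
  rewrite pmulr_rge0 // in key.
  have : s * (nrm w + 1) <= s * (1 + B) by apply: ler_wpM2l; [apply: ltW | lra].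
  rewrite -ipw; lra.
pose m := (h + s * (1 + B) / 2) / t + s.
have hpos : 0 <= h + s * (1 + B) / 2 by lra.
have m0' : 0 < m by rewrite /m; apply: ltr_wpDl => //; apply: divr_ge0 => //; apply: ltW.
have mt' : t * m = h + d ^+ 2.
  rewrite -sden /m /den; field; exact: lt0r_neq0.
clearbody m.
set Y0 := y + s%:C *: 1%:M.
have hY0 : adjmx Y0 = Y0 by rewrite /Y0 adjmxD adjmxZ conj_rc adjmx1 hy.
have pY0 : psd Y0.
  apply: psd_crit => // v; rewrite /Y0 qfD qfZ RED REZ REqf1; exact: F1.
set Y := (m^-1)%:C *: Y0.
have pY : psd Y by apply: psdZ => //; rewrite rc_ge0 invr_ge0; apply: ltW.
have hY : adjmx Y = Y := psd_herm pY.
have ip1rho : ip 1%:M rho = 1 by rewrite ip1 // st.2.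
have eY : forall A, ip Y A = m^-1 * (ip y A + s * ip 1%:M A).
  by move=> A; rewrite /Y /Y0 ipZl ipDl ipZl.
exists Y; split.
  split => // i; apply: psd_crit.
    by rewrite adjmxB adjmx1 blk_adj hY.
  move=> u; rewrite qfB REB REqf1 subr_ge0.
  case: (eqVneq u 0) => [->|un0]; first by rewrite qf0v nv0.
  have nup := nv_gt0 un0.
  have hp : adjmx (pi i u) = pi i u.
    by rewrite adjmx_tens (psd_herm (@delta_psd R _ i)) (herm_state (st_tau u un0)).
  have trp : RE (\tr (pi i u)) = 1.
    by rewrite tr_tens (@delta_state R _ i).2 (st_tau u un0).2 mulr1.
  have ep : delta_mx i i *t (adjmx u *m u) = (nv u)%:C *: pi i u.
    by rewrite /pi /tau tensmxZr scalerA -rmorphM mulfV ?lt0r_neq0 // scale1r.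
  rewrite -ip_blk ep ipZr.
  have := F2 i u un0; rewrite eY ip1 // trp mulr1 => f2.
  have sd : d ^+ 2 = s * (1 + B) / 2 + s * t by rewrite -sden /den; ring.
  have : ip y (pi i u) + s <= m.
    rewrite -(ler_pM2l t0) mulrDr mt' sd; lra.
  move=> hm.
  rewrite -[X in _ <= X]mulr1 ler_pM2l // ler_pdivrMl //; lra.
have pv := tr_psd_mul st.1 pY.
rewrite (ge0_real pv) lecR -ip_tr // ipC eY ip1rho mulr1.
have er : rho = y + c by rewrite /y subrK.
have eyr : ip y rho = nrm y + h by rewrite {1}er ipDr.
rewrite ler_pdivlMl //; rewrite mulrC mt'; lra.
Qed.

End PartE4.

Section PartF.
Variable R : realType.
Local Notation C := (R[i]).
Local Notation "x %:C" := (real_complex R x) (format "x %:C").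
Local Notation RE := (@complex.Re R).

Lemma Cmax_le dX dY (rho : 'M[C]_(dX * dY)) l :
  0 <= l -> feas rho (powR 2 l) -> (Cmax rho <= l%:E)%E.
Proof.
move=> l0 [s [iqs le]].
apply: (@le_trans _ _ (Dmax rho s)); first by apply: ereal_inf_lbound; exists s.
by apply: ereal_inf_lbound; exists l.
Qed.

Lemma Cmax_ge dX dY (rho : 'M[C]_(dX * dY)) (x : \bar R) :
  (forall l, 0 <= l -> feas rho (powR 2 l) -> (x <= l%:E)%E) -> (x <= Cmax rho)%E.
Proof.
move=> H; apply: le_ereal_inf_tmp => _ [s iqs <-].
apply: le_ereal_inf_tmp => _ [l [l0 le] <-]; apply: H => //; by exists s.
Qed.

Lemma Cmax_ge0 dX dY (rho : 'M[C]_(dX * dY)) : (0 <= Cmax rho)%E.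
Proof. by apply: Cmax_ge => l l0 _; rewrite lee_fin. Qed.

Lemma ln2_gt0 : 0 < ln (2 : R).
Proof. by apply: ln_gt0; rewrite ltr1n. Qed.

Lemma powR2E (x : R) : powR 2 x = expR (x * ln 2).
Proof. by rewrite /powR pnatr_eq0. Qed.

Lemma powR2_lt (x y : R) : (powR 2 x < powR 2 y) = (x < y).
Proof. by rewrite !powR2E ltr_expR ltr_pM2r // ln2_gt0. Qed.

Lemma powR2D (x y : R) : powR 2 (x + y) = powR 2 x * powR 2 y.
Proof. by rewrite !powR2E mulrDl expRD. Qed.

Lemma powR2_log (l : R) : 0 < l -> powR 2 (ln l / ln 2) = l.
Proof.
move=> l0; rewrite powR2E divfK ?lnK //; last by rewrite gt_eqF // ln2_gt0.
Qed.

Lemma cert_below dX dY (rho : 'M[C]_(dX * dY)) (a t : R) :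
  is_state rho -> (a%:E < Cmax rho)%E -> t < powR 2 a ->
  exists Y, cert Y /\ t%:C <= \tr (rho *m Y).
Proof.
move=> st aC tT.
case: (lerP t 1) => t1.
  exists 1%:M; split; first exact: cert1.
  by rewrite mulmx1 st.2 -rc1 lecR.
apply: (dual_main st (ltW t1) tT) => l lT fl.
have l1 := feas_ge1 st fl.
have l0 : 0 < l by lra.
have x0 : 0 <= ln l / ln 2.
  by apply: divr_ge0; [rewrite ln_ge0 | apply: ltW; apply: ln2_gt0].
have hC := Cmax_le x0 (eq_ind_r (feas rho) fl (powR2_log l0)).
have : ln l / ln 2 < a by rewrite -powR2_lt powR2_log.
move=> xa; have := lt_le_trans aC hC; rewrite lte_fin; lra.
Qed.

Lemma split_lt (x y : \bar R) (l : R) : (0 <= x)%E -> (0 <= y)%E -> (l%:E < x + y)%E ->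
  exists a1 a2, (a1%:E < x)%E /\ (a2%:E < y)%E /\ l < a1 + a2.
Proof.
case: x => [x||] //; case: y => [y||] // x0 y0.
- rewrite -EFinD lte_fin => h.
  exists (x - (x + y - l) / 3), (y - (x + y - l) / 3); rewrite !lte_fin; split; [|split]; lra.
- move=> _; exists (x - 1), (l - x + 2); rewrite lte_fin ltry; split; [lra|split => //; lra].
- move=> _; exists (l - y + 2), (y - 1); rewrite lte_fin ltry; split => //; split; lra.
- move=> _; exists l, 1; rewrite !ltry; split => //; split => //; lra.
Qed.

Lemma feas_tens a1 b1 a2 b2 (r1 : 'M[C]_(a1 * b1)) (r2 : 'M[C]_(a2 * b2)) p1 p2 :
  psd r1 -> 0 <= p2 -> feas r1 p1 -> feas r2 p2 -> feas (reorder (r1 *t r2)) (p1 * p2).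
Proof.
move=> pr1 p20 [s1 [iq1 le1]] [s2 [iq2 le2]].
exists (reorder (s1 *t s2)); split; first exact: IQ_tens.
have ps2 : psd s2 by have [] := IQ_state iq2.
rewrite /loewner_le -roZ -roB.
have -> : (p1 * p2)%:C *: (s1 *t s2) - r1 *t r2 =
  (p1%:C *: s1 - r1) *t (p2%:C *: s2) + r1 *t (p2%:C *: s2 - r2).
  by rewrite rmorphM; apply/matrixP => i j; rewrite !mxE; ring.
apply: psd_ro; apply: psdD; apply: psd_tens => //.
by apply: psdZ => //; rewrite rc_ge0.
Qed.

End PartF.

Unset Implicit Arguments.

Theorem proposition10 (R : realType) (dA1 dA2 dB1 dB2 : nat)
  (rho1 : 'M[R[i]]_(dA1 * dB1)) (rho2 : 'M[R[i]]_(dA2 * dB2)) :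
  is_state rho1 -> is_state rho2 ->
  @Cmax R (dA1 * dA2) (dB1 * dB2) (@reorder R dA1 dB1 dA2 dB2 (rho1 *t rho2)) =
  (@Cmax R dA1 dB1 rho1 + @Cmax R dA2 dB2 rho2)%E.
Proof.
move=> st1 st2.
apply/eqP; rewrite eq_le; apply/andP; split.
- have g1 := Cmax_ge0 rho1; have g2 := Cmax_ge0 rho2.
  case E1 : (Cmax rho1) g1 => [c1||] // _; case E2 : (Cmax rho2) g2 => [c2||] // _; rewrite /= ?leey //.
  apply/lee_addgt0Pr => e e0.
  have : (Cmax rho1 < (c1 + e / 2)%:E)%E by rewrite E1 lte_fin; lra.
  move=> /ereal_inf_lt [_ [s1 iq1 <-]] /ereal_inf_lt [_ [l1 [l10 le1] <-]]; rewrite lte_fin => hl1.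
  have : (Cmax rho2 < (c2 + e / 2)%:E)%E by rewrite E2 lte_fin; lra.
  move=> /ereal_inf_lt [_ [s2 iq2 <-]] /ereal_inf_lt [_ [l2 [l20 le2] <-]]; rewrite lte_fin => hl2.
  have f1 : feas rho1 (powR 2 l1) by exists s1.
  have f2 : feas rho2 (powR 2 l2) by exists s2.
  have f := feas_tens st1.1 (powR_ge0 _ _) f1 f2.
  rewrite -powR2D in f.
  apply: le_trans (Cmax_le (addr_ge0 l10 l20) f) _.
  by rewrite -!EFinD lee_fin; lra.
- apply: Cmax_ge => l l0 f12.
  rewrite leNgt; apply/negP => hlt.
  have [a1 [a2 [h1 [h2 hl]]]] := split_lt (Cmax_ge0 _) (Cmax_ge0 _) hlt.
  pose e := (a1 + a2 - l) / 3.
  have e0 : 0 < e by rewrite /e; lra.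
  have [Y1 [c1 v1]] : exists Y, cert Y /\ (powR 2 (a1 - e))%:C%C <= \tr (rho1 *m Y).
    by apply: (cert_below st1 h1); rewrite powR2_lt; lra.
  have [Y2 [c2 v2]] : exists Y, cert Y /\ (powR 2 (a2 - e))%:C%C <= \tr (rho2 *m Y).
    by apply: (cert_below st2 h2); rewrite powR2_lt; lra.
  have c12 := cert_tens c1 c2.
  have := cert_feas c12 f12 (powR_ge0 _ _); rewrite tr_ro_tens => h.
  have : ((powR 2 (a1 - e) * powR 2 (a2 - e))%:C <= (powR 2 l)%:C)%C.
    rewrite rmorphM; apply: le_trans h; apply: ler_pM => //; rewrite rc_ge0 powR_ge0 //.
  rewrite lecR -powR2D leNgt powR2_lt => /negP; apply; rewrite /e; lra.
Qed.
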